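(* Let $G$ be a connected simple graph in which every vertex has odd degree, and let $m=|E(G)|$. Let $f_G$ and $\tilde f_G$ be the formulas defined below. If $m$ is even, then $f_G$ is satisfiable and $\tilde f_G$ is unsatisfiable; if $m$ is odd, then $f_G$ is unsatisfiable and $\tilde f_G$ is satisfiable.
   Context: Construction of $f_G$: for each edge $e=\{v,w\}$ of $G$ introduce two variables and literals $a^{v,w},b^{v,w}$ (literals on $v$'s side) with $a^{w,v}=\neg a^{v,w}$ and $b^{w,v}=\neg b^{v,w}$ (literals on $w$'s side). For each vertex $v$ with incident edges $\{v,w_1\},\dots,\{v,w_k\}$ ($k=d(v)$), write $a_i=a^{v,w_i}$, $b_i=b^{v,w_i}$ and add the clauses $(\bigvee_{i\in S}a_i)\vee(\bigvee_{i\in[k]\setminus S}b_i)$ for every $S\subseteq[k]$ with $|S|$ even, together with the clauses $a_i\vee b_i$ for $1\le i\le k$. The formula $f_G$ is the conjunction of all these clauses over all vertices. The twisted formula $\tilde f_G$ is obtained in the same way, except that for one arbitrarily chosen edge $\{v_0,w_0\}$ the negation pairing is twisted: $a^{v_0,w_0}=\neg b^{w_0,v_0}$ and $b^{v_0,w_0}=\neg a^{w_0,v_0}$ (all other edges as before). *)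

(* Defs.v *)
From mathcomp Require Import all_boot.
Set Implicit Arguments. Unset Strict Implicit. Unset Printing Implicit Defensive.

Section Defs.
Variables (T : finType) (e : rel T).

(* neighbours of v (for a simple graph, in bijection with incident edges) *)
Definition neigh (v : T) : {set T} := [set w | e v w].

Definition edges : {set {set T}} :=
  [set E : {set T} | [exists x, [exists y, e x y && (E == [set x; y])]]].
Definition nedges : nat := #|edges|.

(* An assignment gives, to each ordered pair (v,w), a pair of boolean values;
   only the values at "canonical" pairs (rank v < rank w) with e v w are used:
   for the edge {v,w} with v canonical, the two variables of the edge are
   x_a := (alpha v w).1 and x_b := (alpha v w).2, and a^{v,w} = x_a,
   b^{v,w} = x_b.  On the other side, a^{w,v} = ~ a^{v,w}, b^{w,v} = ~ b^{v,w},
   except for the twisted edge {v0,w0}, where a^{w,v} = ~ b^{v,w} and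
   b^{w,v} = ~ a^{v,w}. *)
Definition assignment := T -> T -> bool * bool.

Definition canon (v w : T) : bool := (enum_rank v < enum_rank w)%N.

Definition is_twisted (tw : option (T * T)) (v w : T) : bool :=
  if tw is Some (v0, w0) then
    ((v == v0) && (w == w0)) || ((v == w0) && (w == v0))
  else false.

Definition lits (tw : option (T * T)) (alpha : assignment) (v w : T)
  : bool * bool :=
  if canon v w then alpha v w
  else if is_twisted tw v w then (~~ (alpha w v).2, ~~ (alpha w v).1)
  else (~~ (alpha w v).1, ~~ (alpha w v).2).

Definition parity_clause tw alpha (v : T) (S : {set T}) : bool :=
  [exists w in neigh v,
     ((w \in S) && (lits tw alpha v w).1) ||
     ((w \notin S) && (lits tw alpha v w).2)].

(* truth value of the formula f_G (tw = None) or the twisted formula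
   (tw = Some (v0,w0)) under alpha *)
Definition formula (tw : option (T * T)) (alpha : assignment) : bool :=
  [forall v, [forall S : {set T},
     ((S \subset neigh v) && ~~ odd #|S|) ==> parity_clause tw alpha v S]] &&
  [forall v, [forall w in neigh v,
     (lits tw alpha v w).1 || (lits tw alpha v w).2]].

Definition satisfiable (tw : option (T * T)) : Prop :=
  exists alpha : assignment, formula tw alpha.

End Defs.

(* Main.v *)
Require Import Defs.
From mathcomp Require Import all_boot.
Set Implicit Arguments. Unset Strict Implicit. Unset Printing Implicit Defensive.

Lemma is_twistedC (T : finType) (tw : option (T * T)) v w :
  is_twisted tw v w = is_twisted tw w v.
Proof. by case: tw => [[a b]|] //=; rewrite orbC (andbC (w == a)) (andbC (w == b)). Qed.

Lemma canon_neq (T : finType) (v w : T) : v != w -> canon v w = ~~ canon w v.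
Proof.
move=> nvw; have H : (nat_of_ord (enum_rank w) != enum_rank v).
  by apply: contra nvw => /eqP H; apply/eqP/enum_rank_inj/val_inj.
by rewrite /canon [LHS]ltnNge leq_eqVlt (negbTE H).
Qed.

Lemma lits_swap (T : finType) tw (al : assignment T) (v w : T) : v != w ->
  lits tw al w v = if is_twisted tw v w
                   then (~~ (lits tw al v w).2, ~~ (lits tw al v w).1)
                   else (~~ (lits tw al v w).1, ~~ (lits tw al v w).2).
Proof.
move=> nvw; rewrite /lits (canon_neq nvw) is_twistedC.
case: (canon w v) => //=.
by case: (is_twisted tw v w); case: (al w v) => a b; case: a; case: b.
Qed.

Definition Zs (T : finType) (e : rel T) tw (al : assignment T) v :=
  [set w in neigh e v | ~~ (lits tw al v w).1].

Lemma neq_of_e (T : finType) (e : rel T) (e_irr : irreflexive e) v w :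
  e v w -> v != w.
Proof. by move=> evw; apply/eqP => E; move: evw; rewrite E e_irr. Qed.

Lemma formula_local (T : finType) (e : rel T) (e_sym : symmetric e)
  (e_irr : irreflexive e) tw al :
  formula e tw al ->
  (forall v w, e v w -> (lits tw al v w).2 = ~~ (lits tw al v w).1) /\
  (forall v, odd #|Zs e tw al v|).
Proof.
move/andP=> [/forallP Hc /forallP Hab].
have Hneg : forall v w, e v w -> (lits tw al v w).2 = ~~ (lits tw al v w).1.
  move=> v w evw; have nvw := neq_of_e e_irr evw.
  have /forallP/(_ w) := Hab v; rewrite inE evw /= => h1.
  have /forallP/(_ v) := Hab w; rewrite inE e_sym evw /= (lits_swap _ _ nvw) => h2.
  move: h1 h2; case: (is_twisted tw v w); case: (lits tw al v w) => p q /=;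
    by case: p; case: q.
split=> // v; apply: contraT => ev.
have /forallP/(_ (Zs e tw al v)) := Hc v.
have -> : Zs e tw al v \subset neigh e v.
  by apply/subsetP => w; rewrite inE => /andP[].
rewrite (negbTE ev) /= => /existsP [w /andP [wN]].
rewrite inE wN /=.
case: (lits tw al v w) (Hneg v w) => p q /=; rewrite inE in wN; move/(_ wN) ->.
by case: p.
Qed.

Lemma local_formula (T : finType) (e : rel T) tw al :
  (forall v w, e v w -> (lits tw al v w).2 = ~~ (lits tw al v w).1) ->
  (forall v, odd #|Zs e tw al v|) -> formula e tw al.
Proof.
move=> Hneg Hodd; apply/andP; split; apply/forallP => v; apply/forallP => S.
  apply/implyP => /andP [sub ev].
  case: (pickP [pred w | (w \in S) != (w \in Zs e tw al v)]) => [w /= Hw | H].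
    have wN : w \in neigh e v.
      move: Hw; case wS: (w \in S); first by move=> _; apply: (subsetP sub); rewrite wS.
      by rewrite eq_sym eqbF_neg negbK inE => /andP [].
    apply/existsP; exists w; rewrite wN /=.
    move: Hw; rewrite inE wN /=.
    case: (lits tw al v w) (Hneg v w) => p q /=; rewrite inE in wN; move/(_ wN) ->.
    by case: p; case: (w \in S).
  have E : S = Zs e tw al v by apply/setP => w; move: (H w) => /= /negbFE/eqP.
  by move: ev; rewrite E Hodd.
apply/implyP; rewrite inE => evS.
by case: (lits tw al v S) (Hneg v S evS) => p q /= ->; rewrite orbN.
Qed.

Lemma odd_card (T : finType) (A : {pred T}) :
  odd #|A| = \big[addb/false]_(x : T) (x \in A).
Proof.
rewrite -sum1_card big_mkcond /=.
rewrite (big_morph odd oddD (erefl : odd 0 = false)).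
by apply: eq_bigr => x _; case: (x \in A).
Qed.

Lemma odd_sum (I : finType) (F : I -> nat) :
  odd (\sum_(i : I) F i) = \big[addb/false]_(i : I) odd (F i).
Proof. exact: (big_morph odd oddD (erefl : odd 0 = false)). Qed.

Lemma canon_asym (T : finType) (x y : T) : canon x y -> ~~ canon y x.
Proof. by rewrite /canon => h; rewrite -leqNgt ltnW. Qed.

Lemma canon_irr (T : finType) (x : T) : canon x x = false.
Proof. by rewrite /canon ltnn. Qed.

Lemma odd_nedges (T : finType) (e : rel T) (e_sym : symmetric e)
  (e_irr : irreflexive e) :
  odd (nedges e) =
  \big[addb/false]_(v : T) \big[addb/false]_(w : T) (e v w && canon v w).
Proof.
rewrite /nedges; set CP := [set p : T * T | e p.1 p.2 && canon p.1 p.2].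
have -> : edges e = (fun p => [set p.1; p.2]) @: CP.
  apply/setP => E; rewrite inE; apply/idP/idP.
    case/existsP => x /existsP [y /andP [exy /eqP ->]].
    case cxy: (canon x y).
      by apply/imsetP; exists (x, y) => //; rewrite inE /= exy cxy.
    apply/imsetP; exists (y, x); last by rewrite /= setUC.
    rewrite inE /= e_sym exy /= canon_neq ?cxy //.
    by rewrite eq_sym; apply: (neq_of_e e_irr exy).
  case/imsetP => [[x y]]; rewrite inE /= => /andP [exy _] ->.
  by apply/existsP; exists x; apply/existsP; exists y; rewrite exy eqxx.
rewrite card_in_imset.
  rewrite odd_card pair_big /=.
  by apply: eq_bigr => [[x y]] _; rewrite inE.
move=> [a b] [a' b']; rewrite !inE /= => /andP [eab cab] /andP [eab' cab'] E.
have ha : a \in [set a'; b'] by rewrite -E set21.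
have hb : b \in [set a'; b'] by rewrite -E set22.
have ha' : a' \in [set a; b] by rewrite E set21.
rewrite !inE in ha hb ha'.
case/orP: ha => /eqP Ea; subst a.
  case/orP: hb => /eqP Eb; subst b; first by rewrite canon_irr in cab.
  by [].
case/orP: ha' => /eqP Ea'; subst a'; first by rewrite canon_irr in cab'.
by move: (canon_asym cab); rewrite cab'.
Qed.

Definition As (T : finType) (e : rel T) tw (al : assignment T) v :=
  [set w in neigh e v | (lits tw al v w).1].

Lemma core (T : finType) (e : rel T) (e_sym : symmetric e)
  (e_irr : irreflexive e) tw al
  (Hneg : forall v w, e v w -> (lits tw al v w).2 = ~~ (lits tw al v w).1) :
  \big[addb/false]_(v : T) odd #|As e tw al v| =
  odd (nedges e) (+)
  \big[addb/false]_(v : T) \big[addb/false]_(w : T)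
     (e v w && canon v w && is_twisted tw v w).
Proof.
have pairA : forall v w, e v w -> (lits tw al w v).1 =
   if is_twisted tw v w then (lits tw al v w).1 else ~~ (lits tw al v w).1.
  move=> v w evw; rewrite (lits_swap _ _ (neq_of_e e_irr evw)) Hneg //.
  by case: is_twisted => /=; rewrite ?negbK.
rewrite (odd_nedges e_sym e_irr).
have step1 : \big[addb/false]_(v : T) odd #|As e tw al v| =
   \big[addb/false]_(v : T) \big[addb/false]_(w : T) (e v w && (lits tw al v w).1).
  by apply: eq_bigr => v _; rewrite odd_card; apply: eq_bigr => w _; rewrite !inE.
have step2 : \big[addb/false]_(v : T) \big[addb/false]_(w : T) (e v w && (lits tw al v w).1)
  = \big[addb/false]_(v : T) \big[addb/false]_(w : T) (e v w && canon v w && (lits tw al v w).1)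
  (+) \big[addb/false]_(v : T) \big[addb/false]_(w : T) (e v w && canon w v && (lits tw al v w).1).
  rewrite -big_split; apply: eq_bigr => v _; rewrite -big_split; apply: eq_bigr => w _ /=.
  case evw: (e v w) => //=.
  rewrite [canon v w](canon_neq (neq_of_e e_irr evw)).
  by case: (canon w v); case: (lits tw al v w).1.
have step3 : \big[addb/false]_(v : T) \big[addb/false]_(w : T) (e v w && canon w v && (lits tw al v w).1)
  = \big[addb/false]_(v : T) \big[addb/false]_(w : T) (e v w && canon v w && (lits tw al w v).1).
  by rewrite exchange_big; apply: eq_bigr => v _; apply: eq_bigr => w _; rewrite e_sym.
rewrite step1 step2 step3 -[LHS]big_split -[RHS]big_split /=.
apply: eq_bigr => v _; rewrite -!big_split; apply: eq_bigr => w _ /=.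
case evw: (e v w) => //=; case: (canon v w) => //=.
rewrite (pairA v w evw).
by case: (is_twisted tw v w); case: (lits tw al v w).1.
Qed.

Lemma twc_none (T : finType) (e : rel T) :
  \big[addb/false]_(v : T) \big[addb/false]_(w : T)
     (e v w && canon v w && is_twisted None v w) = false.
Proof. by rewrite big1 // => v _; rewrite big1 // => w _; rewrite andbF. Qed.

Lemma xor_eq1 (T : finType) (b : T) : \big[addb/false]_(w : T) (w == b) = true.
Proof.
by rewrite -[RHS]/(odd 1) -(card1 b) odd_card; apply: eq_bigr => w _; rewrite inE.
Qed.

Lemma twc_some (T : finType) (e : rel T) (e_sym : symmetric e)
  (e_irr : irreflexive e) v0 w0 (e0 : e v0 w0) :
  \big[addb/false]_(v : T) \big[addb/false]_(w : T)
     (e v w && canon v w && is_twisted (Some (v0, w0)) v w) = true.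
Proof.
pose a := if canon v0 w0 then v0 else w0.
pose b := if canon v0 w0 then w0 else v0.
have n0 := neq_of_e e_irr e0.
have H : forall v w, (e v w && canon v w && is_twisted (Some (v0, w0)) v w)
   = (v == a) && (w == b).
  move=> v w /=; rewrite /a /b; apply/idP/idP.
    case/andP => [/andP [evw cvw]] /orP [] /andP [/eqP Ev /eqP Ew]; subst v w.
      by rewrite cvw !eqxx.
    by rewrite (negbTE (canon_asym cvw)) !eqxx.
  case c0: (canon v0 w0) => /andP [/eqP -> /eqP ->]; first by rewrite e0 c0 !eqxx.
  rewrite e_sym e0 /= canon_neq 1?eq_sym // c0 /= !eqxx /=.
  by rewrite orbT.
rewrite -[RHS](xor_eq1 a); apply: eq_bigr => v _.
under eq_bigr => w _ do rewrite H.
case: (v == a) => /=; first exact: xor_eq1.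
by rewrite big1.
Qed.

Lemma split_par (T : finType) (e : rel T) tw al v :
  odd #|neigh e v| = odd #|As e tw al v| (+) odd #|Zs e tw al v|.
Proof.
rewrite !odd_card -big_split; apply: eq_bigr => w _ /=.
by rewrite !inE; case: (e v w); case: (lits tw al v w).1.
Qed.

Definition alx (T : finType) (x : T -> T -> bool) : assignment T :=
  fun v w => (x v w, ~~ x v w).

Lemma alx_neg (T : finType) tw (x : T -> T -> bool) v w :
  (lits tw (alx x) v w).2 = ~~ (lits tw (alx x) v w).1.
Proof.
by rewrite /lits /alx; case: (canon v w); case: (is_twisted tw v w); rewrite /= ?negbK.
Qed.

Lemma alx_lits1 (T : finType) tw (x : T -> T -> bool) v w :
  (lits tw (alx x) v w).1 =
  if canon v w then x v w else if is_twisted tw v w then x w v else ~~ x w v.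
Proof.
by rewrite /lits /alx; case: (canon v w); case: (is_twisted tw v w); rewrite /= ?negbK.
Qed.

Definition flip (T : finType) (x : T -> T -> bool) (a b : T) :=
  fun v w => x v w (+) ((v == a) && (w == b) || (v == b) && (w == a)).

Lemma flip_lits (T : finType) tw (x : T -> T -> bool) a b v w :
  (lits tw (alx (flip x a b)) v w).1 =
  (lits tw (alx x) v w).1 (+) ((v == a) && (w == b) || (v == b) && (w == a)).
Proof.
rewrite !alx_lits1 /flip.
have -> : (w == a) && (v == b) || (w == b) && (v == a) =
          (v == a) && (w == b) || (v == b) && (w == a).
  by case: (v == a); case: (w == b); case: (v == b); case: (w == a).
case: ((v == a) && (w == b) || (v == b) && (w == a));
  case: (canon v w); case: (is_twisted tw v w); rewrite /= ?addbF ?addbT //.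
Qed.

Definition par (T : finType) (e : rel T) tw (x : T -> T -> bool) v :=
  odd #|As e tw (alx x) v|.

Lemma xor_pick (T : finType) (P : pred T) b :
  \big[addb/false]_(w : T) (P w && (w == b)) = P b.
Proof.
rewrite (bigD1 b) //= eqxx andbT big1 ?addbF // => w /negPf ->.
by rewrite andbF.
Qed.

Lemma flip_par (T : finType) (e : rel T) (e_sym : symmetric e)
  (e_irr : irreflexive e) tw x a b (eab : e a b) v :
  par e tw (flip x a b) v = par e tw x v (+) ((v == a) (+) (v == b)).
Proof.
have nab := neq_of_e e_irr eab.
rewrite /par !odd_card.
have -> : \big[addb/false]_(w : T) (w \in As e tw (alx (flip x a b)) v) =
  \big[addb/false]_(w : T) (w \in As e tw (alx x) v) (+)
  \big[addb/false]_(w : T) (e v w && ((v == a) && (w == b) || (v == b) && (w == a))).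
  rewrite -big_split; apply: eq_bigr => w _ /=.
  rewrite !inE flip_lits.
  by case: (e v w); case: (lits tw (alx x) v w).1.
congr (_ (+) _).
case: (v =P a) => [-> | nva].
  rewrite (negbTE nab) /=.
  under eq_bigr => w _ do rewrite orbF.
  by rewrite xor_pick eab.
case: (v =P b) => [-> | nvb] /=.
  by rewrite xor_pick e_sym eab.
by rewrite big1 // => w _; rewrite ?andbF.
Qed.

Lemma path_flip (T : finType) (e : rel T) (e_sym : symmetric e)
  (e_irr : irreflexive e) (e_conn : forall x y : T, connect e x y) tw u w :
  forall x, exists x', forall v,
    par e tw x' v = par e tw x v (+) ((v == u) (+) (v == w)).
Proof.
move: (e_conn u w) => /connectP [p pth ->].
elim: p u pth => [|a p IH] u /=.
  by move=> _ x; exists x => v; rewrite addbb addbF.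
case/andP => eua pth x.
have [x1 H1] := IH a pth (flip x u a).
exists x1 => v; rewrite H1 (flip_par e_sym e_irr _ _ eua).
by case: (par e tw x v); case: (v == u); case: (v == a); case: (v == last a p).
Qed.

Definition bad (T : finType) (e : rel T) tw x := [set v | par e tw x v].

Lemma fix_all (T : finType) (e : rel T) (e_sym : symmetric e)
  (e_irr : irreflexive e) (e_conn : forall x y : T, connect e x y) tw n :
  forall x, #|bad e tw x| <= n -> ~~ odd #|bad e tw x| ->
  exists x', forall v, ~~ par e tw x' v.
Proof.
elim: n => [|n IH] x.
  rewrite leqn0 cards_eq0 => /eqP E _; exists x => v.
  by move/setP: E => /(_ v); rewrite !inE => ->.
case: (set_0Vmem (bad e tw x)) => [E | [u uB]].
  move=> _ _; exists x => v.
  by move/setP: E => /(_ v); rewrite !inE => ->.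
rewrite (cardsD1 u) uB => Hn Hodd.
case: (set_0Vmem (bad e tw x :\ u)) => [E | [w wB]].
  by move: Hodd; rewrite E cards0.
move: Hn Hodd; rewrite (cardsD1 w (bad e tw x :\ u)) wB.
have [x' Hx'] := path_flip e_sym e_irr e_conn tw u w x.
have nwu : w != u by move: wB; rewrite !inE => /andP [].
have E : bad e tw x' = bad e tw x :\ u :\ w.
  apply/setP => v; rewrite !inE Hx'.
  case: (v =P w) => [-> | nvw]; first by move: wB; rewrite !inE (negbTE nwu) /= => ->.
  case: (v =P u) => [-> | nvu] /=; first by move: uB; rewrite !inE => ->.
  by rewrite addbF.
move=> Hn Hodd; apply: (IH x'); rewrite E.
  by move: Hn => /=; rewrite !add1n !ltnS => /ltnW.
by move: Hodd; rewrite !oddD /= ?negbK.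
Qed.

Definition twc (T : finType) (e : rel T) tw :=
  \big[addb/false]_(v : T) \big[addb/false]_(w : T)
     (e v w && canon v w && is_twisted tw v w).

Theorem lemma6 (T : finType) (e : rel T)
  (e_sym : symmetric e) (e_irr : irreflexive e)
  (e_conn : forall x y : T, connect e x y)
  (odd_deg : forall v : T, odd #|neigh e v|)
  (v0 w0 : T) (e0 : e v0 w0) :
  (~~ odd (nedges e) ->
     satisfiable e None /\ ~ satisfiable e (Some (v0, w0))) /\
  (odd (nedges e) ->
     ~ satisfiable e None /\ satisfiable e (Some (v0, w0))).
Proof.
have bad_par : forall tw x, odd #|bad e tw x| = odd (nedges e) (+) twc e tw.
  move=> tw x; rewrite odd_card.
  transitivity (\big[addb/false]_(v : T) par e tw x v).
    by apply: eq_bigr => v _; rewrite inE.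
  exact: (core e_sym e_irr (fun v w _ => alx_neg tw x v w)).
have sat : forall tw, ~~ (odd (nedges e) (+) twc e tw) -> satisfiable e tw.
  move=> tw H.
  have := @fix_all T e e_sym e_irr e_conn tw _
     (fun _ _ => false) (leqnn _).
  rewrite bad_par => /(_ H) [x' Hx'].
  exists (alx x'); apply: local_formula => [v w _|v]; first exact: alx_neg.
  have := split_par e tw (alx x') v; rewrite odd_deg.
  by move: (Hx' v); rewrite /par => /negbTE ->; rewrite addFb.
have unsat : forall tw, satisfiable e tw -> ~~ (odd (nedges e) (+) twc e tw).
  move=> tw [al /(formula_local e_sym e_irr) [Hneg Hz]].
  rewrite /twc -(core e_sym e_irr Hneg) big1 // => v _.
  have := split_par e tw al v; rewrite odd_deg Hz.
  by case: (odd #|As e tw al v|).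
have tn : twc e None = false by exact: twc_none.
have ts : twc e (Some (v0, w0)) = true by exact: twc_some.
split=> Hm; split.
- by apply: sat; rewrite tn addbF.
- by move/unsat; rewrite ts addbT negbK (negbTE Hm).
- by move/unsat; rewrite tn addbF Hm.
- by apply: sat; rewrite ts addbT Hm.
Qed.
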